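(* Let $\Theta\subset\mathbb{R}$ be a finite nonempty set of nonzero reals with $|\bar\theta|\in(0,\pi)$ for all $\bar\theta\in\Theta$, let $\bar\theta_M:=\max_{\bar\theta\in\Theta}|\bar\theta|$, and let $0<\gamma_\theta<\frac{4r_o\|p_d-p_o\|}{\pi^2}$. Set $\delta^*_{\mathcal{V}}:=\Big(\frac{2r_o\|p_d-p_o\|}{\pi^2}-\frac{\gamma_\theta}{2}\Big)\bar\theta_M^2$. Then for every $\delta_{\mathcal{V}}\in(0,\delta^*_{\mathcal{V}}]$, $\mathcal{V}_{nav}$ is a synergistic navigation function on $\mathcal{X}_p\times\mathbb{R}$ relative to $\mathcal{A}_p=\{(p_d,0)\}$ with gap exceeding $\delta_{\mathcal{V}}$, i.e. $\mathcal{V}_{nav}(p,\theta)-\min_{\bar\theta\in\Theta}\mathcal{V}_{nav}(p,\bar\theta)>\delta_{\mathcal{V}}$ for all $(p,\theta)\in C_{\mathcal{V}_{nav}}\setminus\mathcal{A}_p$.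
   Context: Obstacle $\mathcal{O}=\{z\in\mathbb{R}^2:\|z-p_o\|\le r_o\}$ with center $p_o\in\mathbb{R}^2$ and radius $r_o>0$; safety margin $\varepsilon>0$; free space $\mathcal{X}_p=\{p\in\mathbb{R}^2:\|p-p_o\|\ge r_o+\varepsilon\}$. Distance $d_o(p)=\|p-p_o\|-r_o$. Destination $p_d\in\mathcal{X}_p$, $r_d:=d_o(p_d)$, and $r_s\in(\varepsilon,r_d)$. Barrier $\phi(z)=(z-r_s)^2\ln(r_s/z)$ for $z\in(0,r_s]$ and $\phi(z)=0$ for $z>r_s$. Navigation function $V_{nav}(p)=\frac12\|p-p_d\|^2+\varrho\,\phi(d_o(p))$ with $\varrho>0$; $C_{V_{nav}}=\{p\in\mathcal{X}_p:\nabla_pV_{nav}(p)=0\}$. Rotation $\mathcal{R}(\theta)=\exp(\theta\Delta)=\begin{bmatrix}\cos\theta&-\sin\theta\\ \sin\theta&\cos\theta\end{bmatrix}$ with $\Delta=\begin{bmatrix}0&-1\\1&0\end{bmatrix}$. Transformation $\mathcal{T}(p,\theta)=p_o+\mathcal{R}(\theta)(p-p_o)$. Modified navigation function $\mathcal{V}_{nav}(p,\theta)=\frac12\|\mathcal{T}(p,\theta)-p_d\|^2+\varrho\phi(d_o(p))+\frac{\gamma_\theta}{2}\theta^2$. Critical set $C_{\mathcal{V}_{nav}}=\{(p,\theta)\in\mathcal{X}_p\times\mathbb{R}:\nabla_p\mathcal{V}_{nav}=0,\nabla_\theta\mathcal{V}_{nav}=0\}$ (which equals $C_{V_{nav}}\times\{0\}$).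 Definition: for finite nonempty $\Theta\subset\mathbb{R}$, a function $\mathcal{V}:\mathcal{X}_p\times\mathbb{R}\to\mathbb{R}_{\ge0}$ is a synergistic navigation function relative to $\mathcal{A}_p$ with gap exceeding $\delta_{\mathcal{V}}>0$ if $\mathcal{V}(p,\theta)-\min_{\bar\theta\in\Theta}\mathcal{V}(p,\bar\theta)>\delta_{\mathcal{V}}$ for all $(p,\theta)\in C_{\mathcal{V}}\setminus\mathcal{A}_p$. *)

(* Defs.v *)
From Stdlib Require Import Reals List.
From Coquelicot Require Import Coquelicot.
Open Scope R_scope.

Definition pt := (R * R)%type.

Definition dist2 (p q : pt) : R :=
  sqrt ((fst p - fst q) ^ 2 + (snd p - snd q) ^ 2).

Definition d_o (po : pt) (ro : R) (p : pt) : R := dist2 p po - ro.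

Definition in_Xp (po : pt) (ro eps : R) (p : pt) : Prop := dist2 p po >= ro + eps.

(* barrier phi(z) = (z - r_s)^2 ln(r_s/z) for z <= r_s, 0 for z > r_s
   (only evaluated at z = d_o(p) >= eps > 0 on X_p) *)
Definition phi (rs z : R) : R :=
  if Rle_dec z rs then (z - rs) ^ 2 * ln (rs / z) else 0.

Definition rot (th : R) (v : pt) : pt :=
  (cos th * fst v - sin th * snd v, sin th * fst v + cos th * snd v).

Definition Tr (po p : pt) (th : R) : pt :=
  let w := rot th (fst p - fst po, snd p - snd po) in
  (fst po + fst w, snd po + snd w).

Definition Vnav (po : pt) (ro rs : R) (pd : pt) (rho gam : R) (p : pt) (th : R) : R :=
  / 2 * (dist2 (Tr po p th) pd) ^ 2 + rho * phi rs (d_o po ro p) + gam / 2 * th ^ 2.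

Definition critical (po : pt) (ro eps rs : R) (pd : pt) (rho gam : R) (p : pt) (th : R) : Prop :=
  in_Xp po ro eps p /\
  is_derive (fun x => Vnav po ro rs pd rho gam (x, snd p) th) (fst p) 0 /\
  is_derive (fun y => Vnav po ro rs pd rho gam (fst p, y) th) (snd p) 0 /\
  is_derive (fun t => Vnav po ro rs pd rho gam p t) th 0.

Definition list_min (f : R -> R) (l : list R) : R :=
  match l with
  | nil => 0
  | a :: l' => fold_right (fun t m => Rmin (f t) m) (f a) l'
  end.

Definition list_max_abs (l : list R) : R :=
  match l with
  | nil => 0
  | a :: l' => fold_right (fun t m => Rmax (Rabs t) m) (Rabs a) l'
  end.

(* Main.v *)
Require Import Defs.
From Stdlib Require Import Reals Lra Lia Psatz List.
From Coquelicot Require Import Coquelicot.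
Open Scope R_scope.

Definition dphi (rs z : R) : R :=
  if Rle_dec z rs then 2*(z-rs)*ln(rs/z) - (z-rs)^2/z else 0.

Lemma dpl_loc f g z l r : 0 < r -> (forall y, Rabs (y - z) < r -> f y = g y) ->
  derivable_pt_lim g z l -> derivable_pt_lim f z l.
Proof.
  intros Hr Heq Hg eps He. destruct (Hg eps He) as [d Hd].
  assert (Hm : 0 < Rmin d r) by (apply Rmin_pos; [apply cond_pos|lra]).
  exists (mkposreal _ Hm). simpl. intros h Hh Hlt.
  rewrite !Heq.
  - apply Hd; auto. eapply Rlt_le_trans; [exact Hlt| apply Rmin_l].
  - replace (z - z) with 0 by ring. rewrite Rabs_R0; lra.
  - replace (z + h - z) with h by ring. eapply Rlt_le_trans; [exact Hlt| apply Rmin_r].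
Qed.

Lemma ln_le_m1 q : 0 < q -> ln q <= q - 1.
Proof. intros. pose proof (exp_ineq1_le (ln q)). rewrite exp_ln in H0; lra. Qed.

Lemma phi_deriv rs z : 0 < rs -> 0 < z -> is_derive (phi rs) z (dphi rs z).
Proof.
  intros Hrs Hz. apply is_derive_Reals.
  destruct (Rtotal_order z rs) as [Hlt|[Heq|Hgt]].
  - apply (dpl_loc _ (fun t => (t - rs)^2 * ln (rs / t)) _ _ (Rmin (rs - z) z)).
    + apply Rmin_pos; lra.
    + intros y Hy. unfold phi. destruct (Rle_dec y rs) as [_|Hn]; [reflexivity|].
      exfalso. apply Hn. pose proof (Rmin_l (rs-z) z). apply Rabs_def2 in Hy. lra.
    + apply is_derive_Reals. unfold dphi. destruct (Rle_dec z rs) as [_|Hn]; [|lra].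
      auto_derive.
      * repeat split; try lra. apply Rmult_lt_0_compat; [lra|apply Rinv_0_lt_compat; lra].
      * unfold Rdiv. field. lra.
  - subst z. intros eps He.
    assert (Hm : 0 < Rmin (rs/2) eps) by (apply Rmin_pos; lra).
    exists (mkposreal _ Hm). simpl. intros h Hh Hlt.
    pose proof (Rmin_l (rs/2) eps). pose proof (Rmin_r (rs/2) eps).
    apply Rabs_def2 in Hlt.
    unfold dphi, phi. destruct (Rle_dec rs rs) as [_|Hn]; [|lra].
    replace (rs - rs) with 0 by ring.
    destruct (Rle_dec (rs + h) rs) as [Hle|Hnle].
    + assert (Hq : 1 <= rs / (rs + h)).
      { apply Rmult_le_reg_r with (rs + h); [lra|]. field_simplify; lra. }
      assert (HL0 : 0 <= ln (rs / (rs + h))).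
      { rewrite <- ln_1. apply ln_le; lra. }
      assert (HL1 : ln (rs / (rs + h)) <= rs/(rs+h) - 1) by (apply ln_le_m1; lra).
      replace (rs / (rs + h) - 1) with (- h / (rs + h)) in HL1 by (field; lra).
      set (L := ln (rs / (rs + h))) in *.
      assert (HL2 : L * (rs + h) <= - h).
      { apply Rmult_le_reg_r with (/(rs+h)). apply Rinv_0_lt_compat; lra.
        replace (L * (rs + h) * / (rs + h)) with L by (field; lra). lra. }
      replace (((rs + h - rs) ^ 2 * L - 0 ^ 2 * ln (rs / rs)) / h - (2 * 0 * ln (rs / rs) - 0 ^ 2 / rs))
        with (h * L) by (field; lra).
      assert (h < 0) by lra.
      rewrite Rabs_left1 by nra. nra.
    + replace ((0 - 0 ^ 2 * ln (rs / rs)) / h - (2 * 0 * ln (rs / rs) - 0 ^ 2 / rs)) with 0 by (field; lra).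
      rewrite Rabs_R0; lra.
  - apply (dpl_loc _ (fun _ => 0) _ _ (z - rs)).
    + lra.
    + intros y Hy. unfold phi. destruct (Rle_dec y rs) as [Hn|_]; [|reflexivity].
      exfalso. apply Rabs_def2 in Hy. lra.
    + unfold dphi. destruct (Rle_dec z rs) as [Hn|_]; [lra|].
      apply derivable_pt_lim_const.
Qed.

Lemma dphi_nonpos rs z : 0 < rs -> 0 < z -> dphi rs z <= 0.
Proof.
  intros Hrs Hz. unfold dphi. destruct (Rle_dec z rs) as [Hle|_]; [|lra].
  assert (1 <= rs / z) by (apply Rmult_le_reg_r with z; [lra|]; field_simplify; lra).
  assert (0 <= ln (rs / z)) by (rewrite <- ln_1; apply ln_le; lra).
  assert (0 <= (z - rs)^2 / z) by (apply Rdiv_le_0_compat; [apply pow2_ge_0|lra]).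
  nra.
Qed.

Lemma Derive_phi rs z : 0 < rs -> 0 < z -> Derive (fun x => phi rs x) z = dphi rs z.
Proof. intros. apply is_derive_unique. apply phi_deriv; auto. Qed.

Lemma Vnav_eq o1 o2 ro rs d1 d2 rho gam x y th :
 Vnav (o1,o2) ro rs (d1,d2) rho gam (x,y) th =
 /2*((o1 + (cos th*(x-o1) - sin th*(y-o2)) - d1)^2 + (o2 + (sin th*(x-o1)+cos th*(y-o2)) - d2)^2)
 + rho * phi rs (sqrt((x-o1)^2+(y-o2)^2) - ro) + gam/2*th^2.
Proof.
  unfold Vnav, d_o, Tr, rot; unfold dist2; cbn [fst snd]. rewrite pow2_sqrt; [reflexivity|].
  apply Rplus_le_le_0_compat; apply pow2_ge_0.
Qed.

Lemma der_x o1 o2 ro rs d1 d2 rho gam x y th :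
  0 < rs -> 0 < (x-o1)^2+(y-o2)^2 -> 0 < sqrt((x-o1)^2+(y-o2)^2) - ro ->
  is_derive (fun x => Vnav (o1,o2) ro rs (d1,d2) rho gam (x,y) th) x
   ((o1 + (cos th*(x-o1) - sin th*(y-o2)) - d1) * cos th
    + (o2 + (sin th*(x-o1)+cos th*(y-o2)) - d2) * sin th
    + rho * dphi rs (sqrt((x-o1)^2+(y-o2)^2) - ro) * ((x-o1) / sqrt((x-o1)^2+(y-o2)^2))).
Proof.
  intros Hrs HQ Hd.
  eapply is_derive_ext. intro t; symmetry; apply Vnav_eq.
  replace ((x-o1)^2+(y-o2)^2) with ((x + - o1) * ((x + - o1) * 1) + (y - o2) * ((y - o2) * 1)) in * by ring.
  auto_derive.
  - repeat split; try lra. exists (dphi rs (sqrt ((x + - o1) * ((x + - o1) * 1) + (y - o2) * ((y - o2) * 1)) + - ro)).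
    apply phi_deriv; lra.
  - set (Q := (x + - o1) * ((x + - o1) * 1) + (y - o2) * ((y - o2) * 1)) in *.
    assert (Hs : 0 < sqrt Q) by (apply sqrt_lt_R0; lra).
    replace (sqrt Q + - ro) with (sqrt Q - ro) by ring.
    rewrite Derive_phi by lra.
    field. lra.
Qed.

Lemma der_y o1 o2 ro rs d1 d2 rho gam x y th :
  0 < rs -> 0 < (x-o1)^2+(y-o2)^2 -> 0 < sqrt((x-o1)^2+(y-o2)^2) - ro ->
  is_derive (fun y => Vnav (o1,o2) ro rs (d1,d2) rho gam (x,y) th) y
   ((o1 + (cos th*(x-o1) - sin th*(y-o2)) - d1) * (- sin th)
    + (o2 + (sin th*(x-o1)+cos th*(y-o2)) - d2) * cos th
    + rho * dphi rs (sqrt((x-o1)^2+(y-o2)^2) - ro) * ((y-o2) / sqrt((x-o1)^2+(y-o2)^2))).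
Proof.
  intros Hrs HQ Hd.
  eapply is_derive_ext. intro t; symmetry; apply Vnav_eq.
  replace ((x-o1)^2+(y-o2)^2) with ((x - o1) * ((x - o1) * 1) + (y + - o2) * ((y + - o2) * 1)) in * by ring.
  auto_derive.
  - repeat split; try lra. exists (dphi rs (sqrt ((x - o1) * ((x - o1) * 1) + (y + - o2) * ((y + - o2) * 1)) + - ro)).
    apply phi_deriv; lra.
  - set (Q := (x - o1) * ((x - o1) * 1) + (y + - o2) * ((y + - o2) * 1)) in *.
    assert (Hs : 0 < sqrt Q) by (apply sqrt_lt_R0; lra).
    replace (sqrt Q + - ro) with (sqrt Q - ro) by ring.
    rewrite Derive_phi by lra.
    field. lra.
Qed.

Lemma der_t o1 o2 ro rs d1 d2 rho gam x y th :
  is_derive (fun t => Vnav (o1,o2) ro rs (d1,d2) rho gam (x,y) t) th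
   ((o1 + (cos th*(x-o1) - sin th*(y-o2)) - d1) * (- sin th * (x-o1) - cos th * (y-o2))
    + (o2 + (sin th*(x-o1)+cos th*(y-o2)) - d2) * (cos th * (x-o1) - sin th * (y-o2))
    + gam * th).
Proof.
  eapply is_derive_ext. intro t; symmetry; apply Vnav_eq.
  auto_derive. auto. field.
Qed.

Lemma sinlb a : 0 <= a <= 1 -> a - a^3/6 <= sin_lb a.
Proof. intros H. unfold sin_lb, sin_approx, sin_term. simpl sum_f_R0. simpl Factorial.fact.
assert (0 <= a^5) by (apply pow_le; lra). assert (a^7 <= a^5). { replace (a^7) with (a^5*(a*a)) by ring. assert (a*a<=1) by nra. nra. }
 simpl. lra. Qed.
Lemma coslb a : 0 <= a <= 1 -> 1 - a^2/2 <= cos_lb a.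
Proof. intros H. unfold cos_lb, cos_approx, cos_term. simpl sum_f_R0. simpl Factorial.fact.
assert (0 <= a^4) by (apply pow_le; lra). assert (a^6 <= a^4). { replace (a^6) with (a^4*(a*a)) by ring. assert (a*a<=1) by nra. nra. }
 simpl. lra. Qed.

Lemma jordan x : 0 <= x <= PI/2 -> 2 * x / PI <= sin x.
Proof.
  intros Hx. pose proof PI2_3_2. pose proof PI_4.
  apply Rmult_le_reg_r with PI; [lra|].
  replace (2 * x / PI * PI) with (2 * x) by (field; lra).
  destruct (Rle_dec x 1) as [H1|H1].
  - pose proof (SIN x ltac:(lra) ltac:(lra)) as [Hs _].
    pose proof (sinlb x ltac:(lra)).
    assert (x^3 <= x) by (replace (x^3) with (x*(x*x)) by ring; nra).
    nra.
  - rewrite <- cos_shift. set (y := PI/2 - x).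
    pose proof (COS y ltac:(unfold y; lra) ltac:(unfold y; lra)) as [Hc _].
    pose proof (coslb y ltac:(unfold y; lra)).
    assert (x = PI/2 - y) by (unfold y; ring). assert (0 <= y <= 1) by (unfold y; lra).
    clearbody y. subst x. nra.
Qed.

Lemma omc t : Rabs t <= PI -> 2 * t^2 / PI^2 <= 1 - cos t.
Proof.
  intros Ht. pose proof PI2_3_2.
  assert (Hc : cos t = 1 - 2 * sin (Rabs t / 2) * sin (Rabs t / 2)).
  { rewrite <- cos_2a_sin. replace (2 * (Rabs t / 2)) with (Rabs t) by field.
    destruct (Rcase_abs t); [rewrite Rabs_left by lra; rewrite cos_neg|rewrite Rabs_right by lra]; reflexivity. }
  pose proof (Rabs_pos t).
  pose proof (jordan (Rabs t / 2) ltac:(split; lra)).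
  assert (2 * (Rabs t / 2) / PI = Rabs t / PI) as E by (field; lra). rewrite E in H1.
  assert (0 <= Rabs t / PI) by (apply Rdiv_le_0_compat; lra).
  assert (Rabs t / PI * (Rabs t / PI) <= sin (Rabs t / 2) * sin (Rabs t / 2)) by nra.
  assert (t^2 = Rabs t * Rabs t) by (rewrite <- Rabs_mult; simpl; rewrite Rmult_1_r; rewrite Rabs_right; [ring| nra]).
  rewrite Hc, H4.
  replace (2 * (Rabs t * Rabs t) / PI ^ 2) with (2 * (Rabs t / PI * (Rabs t / PI))) by (field; lra).
  lra.
Qed.

Lemma list_min_le f l t : In t l -> list_min f l <= f t.
Proof.
  destruct l as [|a l]; [simpl; tauto|]. simpl.
  revert t. induction l as [|b l IH]; intros t Ht; simpl.
  - destruct Ht as [->|[]]; lra.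
  - destruct Ht as [->|[->|Ht]].
    + eapply Rle_trans; [apply Rmin_r|]. apply IH; auto.
    + apply Rmin_l.
    + eapply Rle_trans; [apply Rmin_r|]. apply IH; auto.
Qed.

Lemma list_max_in l : l <> nil -> exists t, In t l /\ Rabs t = list_max_abs l.
Proof.
  destruct l as [|a l]; [tauto|]. intros _. simpl.
  induction l as [|b l IH]; simpl.
  - exists a; auto.
  - destruct IH as [t [Ht Et]]. unfold Rmax. destruct (Rle_dec (Rabs b) _).
    + exists t. split; [|auto]. destruct Ht as [->|Ht]; auto.
    + exists b; auto.
Qed.

Lemma alg A B C S a b K g : A*C + B*S + K*a = 0 -> -A*S+B*C + K*b = 0 ->
  A*(-S*a - C*b) + B*(C*a - S*b) + g = 0 -> g = 0.
Proof.
  intros H1 H2 H3.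
  replace g with (A*(-S*a-C*b)+B*(C*a-S*b)+g - (a*(-A*S+B*C+K*b) - b*(A*C+B*S+K*a))) by ring.
  rewrite H1, H2, H3; ring.
Qed.

Theorem lemma3 (po pd : pt) (ro eps rs rho gam : R) (Theta : list R) :
  0 < ro -> 0 < eps ->
  in_Xp po ro eps pd ->
  eps < rs -> rs < d_o po ro pd ->
  0 < rho ->
  Theta <> nil ->
  (forall t, In t Theta -> 0 < Rabs t < PI) ->
  0 < gam -> gam < 4 * ro * dist2 pd po / PI ^ 2 ->
  forall delta : R,
    0 < delta ->
    delta <= (2 * ro * dist2 pd po / PI ^ 2 - gam / 2) * (list_max_abs Theta) ^ 2 ->
    forall (p : pt) (th : R),
      critical po ro eps rs pd rho gam p th ->
      (p, th) <> (pd, 0) ->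
      Vnav po ro rs pd rho gam p th
        - list_min (fun t => Vnav po ro rs pd rho gam p t) Theta > delta.
Proof.
  intros Hro Heps Hpd Hers Hrsd Hrho HTne HT Hg0 Hg1 delta Hd0 Hd1 p th Hcr Hne.
  destruct p as [x y], pd as [d1 d2], po as [o1 o2].
  destruct Hcr as [HX [Hdx [Hdy Hdt]]]. cbn [fst snd] in Hdx, Hdy, Hdt.
  unfold in_Xp, dist2 in HX, Hpd. cbn [fst snd] in HX, Hpd.
  unfold d_o, dist2 in Hrsd. cbn [fst snd] in Hrsd.
  unfold dist2 in Hg1, Hd1. cbn [fst snd] in Hg1, Hd1.
  set (nc := sqrt ((d1 - o1) ^ 2 + (d2 - o2) ^ 2)) in *.
  assert (Hnc2 : nc ^ 2 = (d1 - o1) ^ 2 + (d2 - o2) ^ 2).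
  { unfold nc. apply pow2_sqrt. apply Rplus_le_le_0_compat; apply pow2_ge_0. }
  assert (HQ : 0 < (x - o1) ^ 2 + (y - o2) ^ 2).
  { destruct (Rle_or_lt ((x - o1) ^ 2 + (y - o2) ^ 2) 0) as [H|H]; [|exact H].
    assert (E : (x - o1) ^ 2 + (y - o2) ^ 2 = 0) by (pose proof (pow2_ge_0 (x-o1)); pose proof (pow2_ge_0 (y-o2)); lra). rewrite E, sqrt_0 in HX. lra. }
  set (Q := (x - o1) ^ 2 + (y - o2) ^ 2) in *.
  set (r := sqrt Q) in *.
  assert (Hr2 : r ^ 2 = Q) by (unfold r; apply pow2_sqrt; lra).
  assert (Hr0 : 0 < r) by (unfold r; apply sqrt_lt_R0; lra).
  assert (Hdd : 0 < r - ro) by lra.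
  pose proof (is_derive_unique _ _ _ Hdx) as E1.
  rewrite (is_derive_unique _ _ _ (der_x o1 o2 ro rs d1 d2 rho gam x y th ltac:(lra) HQ Hdd)) in E1.
  pose proof (is_derive_unique _ _ _ Hdy) as E2.
  rewrite (is_derive_unique _ _ _ (der_y o1 o2 ro rs d1 d2 rho gam x y th ltac:(lra) HQ Hdd)) in E2.
  pose proof (is_derive_unique _ _ _ Hdt) as E3.
  rewrite (is_derive_unique _ _ _ (der_t o1 o2 ro rs d1 d2 rho gam x y th)) in E3.
  fold Q r in E1, E2.
  set (F := dphi rs (r - ro)) in *.
  set (K := rho * F / r).
  assert (E1' : (o1 + (cos th*(x-o1) - sin th*(y-o2)) - d1) * cos th
    + (o2 + (sin th*(x-o1)+cos th*(y-o2)) - d2) * sin th + K * (x - o1) = 0).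
  { rewrite <- E1. unfold K. field. lra. }
  assert (E2' : - (o1 + (cos th*(x-o1) - sin th*(y-o2)) - d1) * sin th
    + (o2 + (sin th*(x-o1)+cos th*(y-o2)) - d2) * cos th + K * (y - o2) = 0).
  { rewrite <- E2. unfold K. field. lra. }
  assert (E3' : (o1 + (cos th*(x-o1) - sin th*(y-o2)) - d1) * (- sin th * (x-o1) - cos th * (y-o2))
    + (o2 + (sin th*(x-o1)+cos th*(y-o2)) - d2) * (cos th * (x-o1) - sin th * (y-o2))
    + gam * th = 0) by (rewrite <- E3; ring).
  pose proof (alg _ _ _ _ _ _ _ _ E1' E2' E3') as Hgth.
  assert (Hth : th = 0) by nra. subst th.
  rewrite cos_0, sin_0 in E1', E2'.
  assert (Hc1 : d1 - o1 = (1 + K) * (x - o1)) by nra.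
  assert (Hc2 : d2 - o2 = (1 + K) * (y - o2)) by nra.
  assert (HF : F <= 0) by (apply dphi_nonpos; lra).
  assert (HK : K <= 0).
  { unfold K. unfold Rdiv. apply Rmult_le_0_r; [nra|]. left; apply Rinv_0_lt_compat; lra. }
  set (m := 1 + K) in *.
  assert (Hnc0 : 0 < nc) by lra.
  destruct (Req_dec F 0) as [HF0|HF0].
  { exfalso. assert (K = 0) by (unfold K; rewrite HF0; field; lra).
    apply Hne. f_equal. f_equal; nra. }
  assert (Hrrs : r - ro <= rs).
  { unfold F, dphi in HF0. destruct (Rle_dec (r - ro) rs); [auto|]. exfalso; apply HF0; reflexivity. }
  assert (Hm : m < 0).
  { destruct (Rtotal_order m 0) as [H|[H|H]]; [exact H| |]; exfalso.
    - rewrite H in Hc1, Hc2. assert (nc ^ 2 = 0) by (rewrite Hnc2, Hc1, Hc2; ring). nra.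
    - assert (m <= 1) by (unfold m; lra).
      assert (nc ^ 2 = m^2 * Q) by (rewrite Hnc2, Hc1, Hc2; unfold Q; ring).
      assert (m^2 <= 1) by nra.
      assert (r <= rs + ro) by lra.
      assert (nc > rs + ro) by lra.
      nra. }
  assert (Hncr : nc = - m * r).
  { assert (nc ^ 2 = (m * r)^2) by (rewrite Hnc2, Hc1, Hc2; replace ((m*r)^2) with (m^2 * r^2) by ring; rewrite Hr2; unfold Q; ring).
    apply Rsqr_inj; [lra| |].
    - apply Rmult_le_pos; lra.
    - rewrite !Rsqr_pow2, H. ring. }
  destruct (list_max_in Theta HTne) as [tM [HtM EtM]].
  rewrite <- EtM in Hd1.
  pose proof (HT tM HtM) as [HtM0 HtM1].
  pose proof (list_min_le (fun t => Vnav (o1, o2) ro rs (d1, d2) rho gam (x, y) t) Theta tM HtM) as Hmin.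
  cbv beta in Hmin.
  assert (Hom : 2 * tM ^ 2 / PI ^ 2 <= 1 - cos tM) by (apply omc; lra).
  assert (Hcs : sin tM ^ 2 + cos tM ^ 2 = 1) by (pose proof (sin2_cos2 tM); unfold Rsqr in *; nra).
  assert (Hdiff : Vnav (o1, o2) ro rs (d1, d2) rho gam (x, y) 0 - Vnav (o1, o2) ro rs (d1, d2) rho gam (x, y) tM
     = nc * r * (1 - cos tM) - gam / 2 * tM ^ 2).
  { rewrite !Vnav_eq, cos_0, sin_0, Hncr.
    replace d1 with (o1 + m * (x - o1)) by lra.
    replace d2 with (o2 + m * (y - o2)) by lra.
    replace (- m * r * r * (1 - cos tM)) with (- m * r^2 * (1 - cos tM)) by ring.
    rewrite Hr2. unfold Q.
    replace (cos tM ^ 2) with (1 - sin tM ^ 2) by lra.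
    ring_simplify. replace (cos tM ^ 2) with (1 - sin tM ^ 2) by lra. field. }
  assert (HA : Rabs tM ^ 2 = tM ^ 2) by (rewrite <- Rsqr_pow2, <- Rsqr_abs, Rsqr_pow2; reflexivity).
  rewrite HA in Hd1.
  assert (Hpi : 0 < PI) by apply PI_RGT_0.
  assert (Ht2 : 0 < tM ^ 2) by (rewrite <- HA; apply pow_lt; lra).
  set (w := 2 * tM ^ 2 / PI ^ 2) in *.
  assert (Hw : 0 < w) by (unfold w; apply Rdiv_lt_0_compat; [lra| apply pow_lt; lra]).
  assert (Hd2 : delta <= ro * nc * w - gam / 2 * tM ^ 2).
  { replace (ro * nc * w - gam / 2 * tM ^ 2) with ((2 * ro * nc / PI ^ 2 - gam / 2) * tM ^ 2)
      by (unfold w; field; lra). exact Hd1. }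
  assert (0 < nc * w * (r - ro)) by (apply Rmult_lt_0_compat; [apply Rmult_lt_0_compat|]; lra).
  assert (nc * r * w <= nc * r * (1 - cos tM)) by (apply Rmult_le_compat_l; [apply Rmult_le_pos|]; lra).
  assert (nc * r * w - ro * nc * w = nc * w * (r - ro)) by ring.
  lra.
Qed.
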